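(* Let $L>0$, $\Omega=(-L,L)$, and let $h>0$ be a mesh size with $L/h\in\mathbb{N}$ and $L\ge 4h$. Assume there are continuous functions $f:[-L,L]\times[0,\infty)\to\mathbb{R}$, $g:[0,\infty)\to\mathbb{R}$ and a constant $K>0$ such that (i) $g(0)>0$, $g$ is strictly increasing, and with $G(s):=\int_K^s g(t)\,dt$ one has $\lim_{s\to\infty} \frac{s}{\sqrt{G(s)}}=0$; (ii) $f(x,s)\ge g(s)$ for all $s\ge K$ and all $x\in[-L,L]$. Then there exists a constant $\overline{M}$, independent of the mesh size $h$, such that every non-negative solution $u:\overline{\Omega}_h\to[0,\infty)$ of $$-\Delta_h u(x)=f(x,u(x))\ \ (x\in\Omega_h),\qquad u=0\ \text{on }\partial\Omega_h$$ satisfies $\|u\|_\infty=\max_{x\in\overline{\Omega}_h}|u(x)|\le \overline{M}$.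
   Context: For the mesh size $h>0$: $\mathbb{R}_h=h\mathbb{Z}$, $\overline{\Omega}_h=[-L,L]\cap h\mathbb{Z}$, $\Omega_h=(-L,L)\cap h\mathbb{Z}$, $\partial\Omega_h=\{-L,L\}$. The discrete Laplacian is $\Delta_h u(x)=\frac{u(x+h)-2u(x)+u(x-h)}{h^2}$ for $x\in\Omega_h$. *)

(* Defs.v *)
From Stdlib Require Import Reals ZArith.
From Coquelicot Require Import Coquelicot.
Open Scope R_scope.

Definition cont_on_strip (L : R) (f : R -> R -> R) : Prop :=
  forall x s, -L <= x <= L -> 0 <= s ->
  forall eps, 0 < eps -> exists delta, 0 < delta /\
    forall y t, -L <= y <= L -> 0 <= t ->
      Rabs (y - x) < delta -> Rabs (t - s) < delta ->
      Rabs (f y t - f x s) < eps.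

Definition cont_on_halfline (g : R -> R) : Prop :=
  forall s, 0 <= s -> forall eps, 0 < eps -> exists delta, 0 < delta /\
    forall t, 0 <= t -> Rabs (t - s) < delta -> Rabs (g t - g s) < eps.

Definition strict_incr_halfline (g : R -> R) : Prop :=
  forall s t, 0 <= s -> s < t -> g s < g t.

Definition Gprim (g : R -> R) (K s : R) : R := RInt g K s.

(* Grid functions u : Z -> R, u k = value at the node x = k*h.
   Discrete Laplacian at node k. *)
Definition dlap (h : R) (u : Z -> R) (k : Z) : R :=
  (u (k + 1)%Z - 2 * u k + u (k - 1)%Z) / (h ^ 2).

(* u is a non-negative solution of -Delta_h u = f(x,u) on Omega_h,
   u = 0 on the boundary {-L, L} = {-n h, n h}, where L = n h. *)
Definition is_nonneg_discrete_solution (f : R -> R -> R) (n : nat) (h : R)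
    (u : Z -> R) : Prop :=
  (forall k, (- Z.of_nat n <= k <= Z.of_nat n)%Z -> 0 <= u k) /\
  (forall k, (- Z.of_nat n < k < Z.of_nat n)%Z ->
      - dlap h u k = f (IZR k * h) (u k)) /\
  u (- Z.of_nat n)%Z = 0 /\ u (Z.of_nat n) = 0.

(* Main.v *)
Require Import Defs.
From Stdlib Require Import Reals ZArith Lra Lia Psatz Classical ClassicalEpsilon.
From Coquelicot Require Import Coquelicot.
Open Scope R_scope.

Lemma chord_nat (y : nat -> R) (N : nat) :
 (forall i, (i+2 <= N)%nat -> y (i+2)%nat - 2 * y (S i) + y i <= 0) ->
 forall i, (i <= N)%nat -> INR N * y i >= INR (N - i) * y 0%nat + INR i * y N.
Proof.
  intros Hc.
  set (dl := fun i => y (S i) - y i).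
  assert (Hd : forall i, (i + 2 <= N)%nat -> dl (S i) <= dl i).
  { intros i Hi. unfold dl. specialize (Hc i Hi).
    replace (S (S i)) with (i+2)%nat by lia. lra. }
  assert (HB : forall k, (k < N)%nat -> y k - y 0%nat >= INR k * dl k).
  { induction k as [|k IH]; intros Hk.
    - simpl. lra.
    - assert (IH' := IH ltac:(lia)). assert (Hdk := Hd k ltac:(lia)).
      rewrite S_INR. unfold dl at 1 in IH'.
      assert (0 <= INR k) by apply pos_INR.
      assert (INR k * dl (S k) <= INR k * dl k) by (apply Rmult_le_compat_l; lra).
      unfold dl in *. nra. }
  assert (HC : forall d k, (k + S d = N)%nat -> y (k + S d)%nat - y k <= INR (S d) * dl k).
  { induction d as [|d IH]; intros k Hk.
    - replace (k + 1)%nat with (S k) by lia. unfold dl. simpl. lra.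
    - assert (IH' := IH (S k) ltac:(lia)). assert (Hdk := Hd k ltac:(lia)).
      replace (k + S (S d))%nat with (S k + S d)%nat by lia.
      assert (0 <= INR (S d)) by apply pos_INR.
      assert (INR (S d) * dl (S k) <= INR (S d) * dl k) by (apply Rmult_le_compat_l; lra).
      rewrite (S_INR (S d)). unfold dl in *. lra. }
  intros i Hi.
  destruct (Nat.eq_dec i 0) as [->|Hi0].
  { rewrite Nat.sub_0_r. simpl. lra. }
  destruct (Nat.eq_dec i N) as [->|HiN].
  { rewrite Nat.sub_diag. simpl. lra. }
  assert (H1 := HB i ltac:(lia)).
  assert (H2 := HC (N - i - 1)%nat i ltac:(lia)).
  replace (i + S (N - i - 1))%nat with N in H2 by lia.
  replace (S (N - i - 1)) with (N - i)%nat in H2 by lia.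
  rewrite minus_INR in * by lia.
  assert (0 <= INR i) by apply pos_INR.
  assert (INR i <= INR N) by (apply le_INR; lia).
  assert (INR i * (y N - y i) <= INR i * ((INR N - INR i) * dl i)) by (apply Rmult_le_compat_l; lra).
  assert ((INR N - INR i) * (INR i * dl i) <= (INR N - INR i) * (y i - y 0%nat)) by (apply Rmult_le_compat_l; lra).
  nra.
Qed.

Lemma chordZ (z : Z -> R) (a b k : Z) : (a <= k <= b)%Z ->
  (forall j, (a < j < b)%Z -> z (j+1)%Z - 2 * z j + z (j-1)%Z <= 0) ->
  IZR (b - a) * z k >= IZR (b - k) * z a + IZR (k - a) * z b.
Proof.
  intros Hk Hc.
  set (y := fun i : nat => z (a + Z.of_nat i)%Z).
  assert (H := chord_nat y (Z.to_nat (b - a))).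
  assert (Hc' : forall i, (i+2 <= Z.to_nat (b - a))%nat -> y (i+2)%nat - 2 * y (S i) + y i <= 0).
  { intros i Hi. unfold y. specialize (Hc (a + Z.of_nat (S i))%Z ltac:(lia)).
    replace (a + Z.of_nat (i + 2))%Z with (a + Z.of_nat (S i) + 1)%Z by lia.
    replace (a + Z.of_nat i)%Z with (a + Z.of_nat (S i) - 1)%Z by lia. lra. }
  specialize (H Hc' (Z.to_nat (k - a)) ltac:(lia)).
  unfold y in H.
  replace (a + Z.of_nat (Z.to_nat (k - a)))%Z with k in H by lia.
  replace (a + Z.of_nat 0)%Z with a in H by lia.
  replace (a + Z.of_nat (Z.to_nat (b - a)))%Z with b in H by lia.
  replace (Z.to_nat (b - a) - Z.to_nat (k - a))%nat with (Z.to_nat (b - k)) in H by lia.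
  rewrite !INR_IZR_INZ, !Z2Nat.id in H by lia. exact H.
Qed.
Lemma nat_above (r : R) : exists N : nat, r < INR N.
Proof.
  destruct (archimed r) as [H _].
  exists (Z.to_nat (up r)).
  destruct (Z_le_gt_dec 0 (up r)).
  - rewrite INR_IZR_INZ, Z2Nat.id by lia. lra.
  - replace (Z.to_nat (up r)) with 0%nat by lia. simpl. assert (IZR (up r) <= 0) by (apply IZR_le; lia). lra.
Qed.

Lemma f_lower (L K : R) (f : R -> R -> R) : 0 < L -> 0 < K -> cont_on_strip L f ->
  exists C, 0 <= C /\ forall x s, -L <= x <= L -> 0 <= s <= K -> -C <= f x s.
Proof.
  intros HL HK Hf.
  assert (Hd : forall x s, exists d : posreal, (-L <= x <= L /\ 0 <= s) ->
     forall y t, -L <= y <= L -> 0 <= t -> Rabs (y - x) < d -> Rabs (t - s) < d ->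
      Rabs (f y t - f x s) < 1).
  { intros x s. destruct (classic (-L <= x <= L /\ 0 <= s)) as [[Hx Hs]|Hn].
    - destruct (Hf x s Hx Hs 1 Rlt_0_1) as [d [Hd1 Hd2]].
      exists (mkposreal d Hd1). intros _. exact Hd2.
    - exists (mkposreal 1 Rlt_0_1). intros H; tauto. }
  set (del := fun x s => proj1_sig (constructive_indefinite_description _ (Hd x s))).
  assert (Hdel : forall x s, (-L <= x <= L /\ 0 <= s) ->
     forall y t, -L <= y <= L -> 0 <= t -> Rabs (y - x) < del x s -> Rabs (t - s) < del x s ->
      Rabs (f y t - f x s) < 1).
  { intros x s. unfold del. destruct (constructive_indefinite_description _ (Hd x s)) as [d Pd].
    simpl. exact Pd. }
  destruct (compactness_value_2d (-L) L 0 K (fun x s => pos_div_2 (del x s))) as [d Hcomp].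
  assert (Hu : forall x1 s1 x2 s2, -L <= x1 <= L -> 0 <= s1 <= K -> -L <= x2 <= L -> 0 <= s2 <= K ->
     Rabs (x1 - x2) < d -> Rabs (s1 - s2) < d -> Rabs (f x1 s1 - f x2 s2) < 2).
  { intros x1 s1 x2 s2 Hx1 Hs1 Hx2 Hs2 Ha Hb.
    apply NNPP. intro Hcon. apply (Hcomp x2 s2 Hx2 Hs2). intros [u [v [Hu1 [Hv1 [H1 [H2 H3]]]]]].
    simpl in H1, H2, H3.
    assert (Hp : 0 < del u v) by apply cond_pos.
    assert (E1 : Rabs (f x2 s2 - f u v) < 1).
    { apply (Hdel u v ltac:(lra)); try lra. }
    assert (E2 : Rabs (f x1 s1 - f u v) < 1).
    { apply (Hdel u v ltac:(lra)); try lra.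
      - apply Rle_lt_trans with (Rabs (x1 - x2) + Rabs (x2 - u)).
        + replace (x1 - u) with ((x1 - x2) + (x2 - u)) by ring. apply Rabs_triang.
        + lra.
      - apply Rle_lt_trans with (Rabs (s1 - s2) + Rabs (s2 - v)).
        + replace (s1 - v) with ((s1 - s2) + (s2 - v)) by ring. apply Rabs_triang.
        + lra. }
    apply Hcon.
    apply Rle_lt_trans with (Rabs (f x1 s1 - f u v) + Rabs (f u v - f x2 s2)).
    + replace (f x1 s1 - f x2 s2) with ((f x1 s1 - f u v) + (f u v - f x2 s2)) by ring.
      apply Rabs_triang.
    + rewrite Rabs_minus_sym in E1. lra. }
  assert (Hdp : 0 < d) by apply cond_pos.
  destruct (nat_above ((2 * L + K) / d)) as [N HN].
  assert (HNpos : 0 < INR N).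
  { assert (0 < (2 * L + K) / d) by (apply Rdiv_lt_0_compat; lra). lra. }
  assert (HNd : 2 * L + K < INR N * d).
  { apply (Rmult_lt_compat_r d) in HN; auto. unfold Rdiv in HN.
    rewrite Rmult_assoc, Rinv_l in HN by lra. lra. }
  exists (Rabs (f (-L) 0) + 2 * INR N). split.
  { assert (0 <= Rabs (f (-L) 0)) by apply Rabs_pos. lra. }
  intros x s Hx Hs.
  set (px := fun i : nat => -L + INR i / INR N * (x + L)).
  set (ps := fun i : nat => INR i / INR N * s).
  assert (Hr : forall i, (i <= N)%nat -> 0 <= INR i / INR N <= 1).
  { intros i Hi. assert (0 <= INR i) by apply pos_INR.
    assert (INR i <= INR N) by (apply le_INR; lia). split.
    - apply Rmult_le_pos; auto. left; apply Rinv_0_lt_compat; lra.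
    - apply (Rmult_le_reg_r (INR N)); auto. unfold Rdiv.
      rewrite Rmult_assoc, Rinv_l by lra. lra. }
  assert (Hin : forall i, (i <= N)%nat -> -L <= px i <= L /\ 0 <= ps i <= K).
  { intros i Hi. destruct (Hr i Hi). unfold px, ps. split; split; nra. }
  assert (Hstep : forall i, (i < N)%nat -> INR (S i) / INR N - INR i / INR N = / INR N).
  { intros i Hi. rewrite S_INR. field. lra. }
  assert (Hsmall : forall a, 0 <= a <= 2 * L + K -> a * / INR N < d).
  { intros a Ha. apply (Rmult_lt_reg_r (INR N)); auto.
    rewrite Rmult_assoc, Rinv_l by lra. lra. }
  assert (Hch : forall i, (i <= N)%nat -> Rabs (f (px i) (ps i) - f (-L) 0) <= 2 * INR i).
  { induction i as [|i IH]; intros Hi.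
    - unfold px, ps. simpl. unfold Rdiv. rewrite !Rmult_0_l, Rplus_0_r.
      replace (f (-L) 0 - f (-L) 0) with 0 by ring. rewrite Rabs_R0. lra.
    - specialize (IH ltac:(lia)).
      destruct (Hin i ltac:(lia)) as [Hi1 Hi2]. destruct (Hin (S i) Hi) as [Hi3 Hi4].
      assert (Hs' := Hstep i ltac:(lia)).
      assert (E : Rabs (f (px (S i)) (ps (S i)) - f (px i) (ps i)) < 2).
      { apply Hu; auto.
        - unfold px. replace (-L + INR (S i) / INR N * (x + L) - (-L + INR i / INR N * (x + L)))
             with ((x + L) * / INR N).
          + rewrite Rabs_pos_eq. apply Hsmall; lra. apply Rmult_le_pos. lra.
            left; apply Rinv_0_lt_compat; lra.
          + rewrite <- Hs'. ring.
        - unfold ps. replace (INR (S i) / INR N * s - INR i / INR N * s) with (s * / INR N).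
          + rewrite Rabs_pos_eq. apply Hsmall; lra. apply Rmult_le_pos. lra.
            left; apply Rinv_0_lt_compat; lra.
          + rewrite <- Hs'. ring. }
      rewrite S_INR.
      apply Rle_trans with (Rabs (f (px (S i)) (ps (S i)) - f (px i) (ps i)) + Rabs (f (px i) (ps i) - f (-L) 0)).
      + replace (f (px (S i)) (ps (S i)) - f (-L) 0) with
          ((f (px (S i)) (ps (S i)) - f (px i) (ps i)) + (f (px i) (ps i) - f (-L) 0)) by ring.
        apply Rabs_triang.
      + lra. }
  specialize (Hch N (le_n N)).
  unfold px, ps in Hch. unfold Rdiv in Hch. rewrite Rinv_r in Hch by lra.
  replace (-L + 1 * (x + L)) with x in Hch by ring. rewrite Rmult_1_l in Hch.
  assert (H1 := Rle_abs (f (-L) 0 - f x s)). rewrite Rabs_minus_sym in H1.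
  assert (H2 := Rle_abs (- f (-L) 0)). rewrite Rabs_Ropp in H2.
  lra.
Qed.
Lemma g_super (K : R) (g : R -> R) : 0 < K -> cont_on_halfline g -> 0 < g 0 ->
  strict_incr_halfline g -> is_lim (fun s => s / sqrt (Gprim g K s)) p_infty 0 ->
  forall A B, 0 <= A -> 0 <= B -> exists T, K <= T /\ forall s, T <= s -> A * s + B < g s.
Proof.
  intros HK Hc Hg0 Hinc Hlim A B HA HB.
  assert (gpos : forall s, 0 <= s -> 0 < g s).
  { intros s Hs. destruct (Req_dec s 0) as [->|Hn]; auto.
    assert (g 0 < g s) by (apply Hinc; lra). lra. }
  assert (gcont : forall z, 0 < z -> continuous g z).
  { intros z Hz. apply continuity_pt_filterlim.
    unfold continuity_pt, continue_in, limit1_in, limit_in. simpl. unfold R_dist.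
    intros eps Heps. destruct (Hc z ltac:(lra) eps Heps) as [d [Hd1 Hd2]].
    exists (Rmin d z). split. { apply Rmin_pos; lra. }
    intros x [_ Hx]. apply Hd2.
    - assert (Rabs (x - z) < z) by (eapply Rlt_le_trans; [exact Hx| apply Rmin_r]).
      apply Rabs_def2 in H. lra.
    - eapply Rlt_le_trans; [exact Hx| apply Rmin_l]. }
  assert (Hex : forall a b, K <= a <= b -> ex_RInt g a b).
  { intros a b Hab. apply (@ex_RInt_continuous R_CompleteNormedModule). intros z Hz.
    rewrite Rmin_left in Hz by lra. apply gcont. lra. }
  assert (Hup : forall s, K <= s -> Gprim g K s <= (s - K) * g s).
  { intros s Hs. unfold Gprim.
    assert (RInt g K s <= RInt (fun _ => g s) K s).
    { apply RInt_le; [lra | apply Hex; lra | apply ex_RInt_const | ].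
      intros x Hx. destruct (Req_dec x s) as [->|Hn]; [lra|].
      left; apply Hinc; lra. }
    rewrite RInt_const in H. exact H. }
  assert (Hlo : forall s, K <= s -> (s - K) * g K <= Gprim g K s).
  { intros s Hs. unfold Gprim.
    assert (RInt (fun _ => g K) K s <= RInt g K s).
    { apply RInt_le; [lra | apply ex_RInt_const | apply Hex; lra | ].
      intros x Hx. left; apply Hinc; lra. }
    rewrite RInt_const in H. exact H. }
  apply is_lim_spec in Hlim. simpl in Hlim.
  set (c := A + B + 1).
  assert (Hc1 : 1 <= c) by (unfold c; lra).
  assert (Hep : 0 < / c) by (apply Rinv_0_lt_compat; lra).
  destruct (Hlim (mkposreal _ Hep)) as [M0 HM0]. simpl in HM0.
  exists (Rmax (K + 1) (M0 + 1)). split.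
  { assert (K + 1 <= Rmax (K + 1) (M0 + 1)) by apply Rmax_l. lra. }
  intros s Hs.
  assert (Hs1 : K + 1 <= s) by (eapply Rle_trans; [apply Rmax_l | exact Hs]).
  assert (Hs2 : M0 + 1 <= s) by (eapply Rle_trans; [apply Rmax_r | exact Hs]).
  specialize (HM0 s ltac:(lra)). rewrite Rminus_0_r in HM0.
  set (G := Gprim g K s) in *.
  assert (HgK := gpos K ltac:(lra)). assert (Hgs := gpos s ltac:(lra)).
  assert (HGpos : 0 < G).
  { assert (H := Hlo s ltac:(lra)). fold G in H. nra. }
  assert (Hsq : 0 < sqrt G) by (apply sqrt_lt_R0; auto).
  assert (H1 : s / sqrt G < / c).
  { eapply Rle_lt_trans; [apply Rle_abs | exact HM0]. }
  assert (H2 : s * c < sqrt G).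
  { apply (Rmult_lt_compat_r (sqrt G * c)) in H1; [|nra].
    unfold Rdiv in H1.
    replace (s * / sqrt G * (sqrt G * c)) with (s * c * (sqrt G * / sqrt G)) in H1 by ring.
    replace (/ c * (sqrt G * c)) with (sqrt G * (c * / c)) in H1 by ring.
    rewrite Rinv_r in H1 by lra. rewrite Rinv_r in H1 by lra. lra. }
  assert (H3 : (s * c) * (s * c) < G).
  { rewrite <- (sqrt_sqrt G) by lra.
    assert (0 <= s * c) by nra. nra. }
  assert (H4 := Hup s ltac:(lra)). fold G in H4.
  assert (H5 : s * c * c < g s).
  { apply (Rmult_lt_reg_l s); [lra|].
    assert ((s - K) * g s <= s * g s) by nra. nra. }
  assert (s * c <= s * c * c).
  { assert (0 <= s * c) by nra. nra. }
  assert (B <= B * s) by nra.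
  unfold c in *. nra.
Qed.

Theorem mainTheorem1 :
  forall (L K : R) (f : R -> R -> R) (g : R -> R),
    0 < L -> 0 < K ->
    cont_on_strip L f ->
    cont_on_halfline g ->
    0 < g 0 ->
    strict_incr_halfline g ->
    is_lim (fun s => s / sqrt (Gprim g K s)) p_infty 0 ->
    (forall x s, -L <= x <= L -> K <= s -> g s <= f x s) ->
    exists Mbar : R,
      forall (h : R) (n : nat),
        0 < h -> L = INR n * h -> 4 * h <= L ->
        forall u : Z -> R,
          is_nonneg_discrete_solution f n h u ->
          forall k, (- Z.of_nat n <= k <= Z.of_nat n)%Z -> Rabs (u k) <= Mbar.
Proof.
  intros L K f g HL HK Hf Hg Hg0 Hinc Hlim Hfg.
  destruct (f_lower L K f HL HK Hf) as [C [HC HfC0]].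
  assert (gpos : forall s, 0 <= s -> 0 < g s).
  { intros s Hs. destruct (Req_dec s 0) as [->|Hn]; auto.
    assert (g 0 < g s) by (apply Hinc; lra). lra. }
  assert (HfC : forall x s, -L <= x <= L -> 0 <= s -> -C <= f x s).
  { intros x s Hx Hs. destruct (Rle_dec s K).
    - apply HfC0; lra.
    - assert (g s <= f x s) by (apply Hfg; lra). assert (0 < g s) by (apply gpos; lra). lra. }
  set (A := 50 / (L * L)). set (B := 60 * C).
  assert (HA : A * (L * L) = 50) by (unfold A; field; lra).
  assert (HA0 : 0 <= A) by (unfold A; apply Rlt_le, Rdiv_lt_0_compat; nra).
  destruct (g_super K g HK Hg Hg0 Hinc Hlim A B HA0 ltac:(unfold B; lra)) as [T [HKT HT]].
  exists (16 * T + 20 * C * (L * L)).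
  intros h n Hh HLn H4 u [Hnn [Heq [Hb1 Hb2]]] k1 Hk1.
  set (N := Z.of_nat n) in *.
  assert (HN : IZR N = INR n) by (unfold N; rewrite INR_IZR_INZ; reflexivity).
  assert (HN4 : 4 <= IZR N) by (rewrite HN; nra).
  assert (HN4z : (4 <= N)%Z) by (apply le_IZR; lra).
  assert (HLN : L = IZR N * h) by (rewrite HN; exact HLn).
  assert (Hx : forall j, (- N <= j <= N)%Z -> -L <= IZR j * h <= L).
  { intros j Hj. assert (IZR (-N) <= IZR j) by (apply IZR_le; lia).
    assert (IZR j <= IZR N) by (apply IZR_le; lia). rewrite opp_IZR in *. nra. }
  assert (Hx2 : forall j, (- N <= j <= N)%Z -> (IZR j * h) * (IZR j * h) <= L * L).
  { intros j Hj. destruct (Hx j Hj). nra. }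
  assert (Hsec : forall j, (- N < j < N)%Z ->
     u (j+1)%Z - 2 * u j + u (j-1)%Z = - (h * h) * f (IZR j * h) (u j)).
  { intros j Hj. assert (e := Heq j Hj). unfold dlap in e. rewrite <- e. field. lra. }
  assert (Hsq : forall j, (IZR (j+1) * h) * (IZR (j+1) * h) - 2 * ((IZR j * h) * (IZR j * h))
           + (IZR (j-1) * h) * (IZR (j-1) * h) = 2 * (h * h)).
  { intros j. rewrite plus_IZR, minus_IZR. ring. }
  assert (Hun : forall j, (- N <= j <= N)%Z -> 0 <= u j) by exact Hnn.
  assert (Hreg : forall k0 k, (- N <= k0 <= N)%Z -> (- N <= k <= N)%Z -> (2 * k <= N)%Z ->
     (- (2 * k) <= N)%Z -> u k0 / 4 - C * (L * L) <= u k).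
  { intros k0 k Hk0 Hk Hk2 Hk3.
    assert (Hk0u := Hun k0 Hk0). assert (Hku := Hun k Hk).
    destruct (Rle_dec (u k0 / 4 - C * (L * L)) 0) as [Hle|Hgt]; [lra|].
    apply Rnot_le_lt in Hgt.
    set (v := fun j => u j - C * ((IZR j * h) * (IZR j * h)) / 2).
    assert (Hvc : forall j, (- N < j < N)%Z -> v (j+1)%Z - 2 * v j + v (j-1)%Z <= 0).
    { intros j Hj. unfold v.
      assert (E := Hsec j Hj). assert (F := HfC (IZR j * h) (u j) (Hx j ltac:(lia)) (Hun j ltac:(lia))).
      assert (S := Hsq j). nra. }
    assert (Hv0 : u k0 - C * (L * L) / 2 <= v k0).
    { unfold v; cbv beta. assert (H := Hx2 k0 Hk0). nra. }
    assert (HvN : v N = - C * (L * L) / 2).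
    { unfold v; cbv beta. rewrite Hb2, <- HLN. lra. }
    assert (HvmN : v (- N)%Z = - C * (L * L) / 2).
    { unfold v; cbv beta. rewrite Hb1, opp_IZR. replace (- IZR N * h * (- IZR N * h)) with (L * L) by (rewrite HLN; lra). lra. }
    assert (Hvk : v k <= u k).
    { unfold v; cbv beta. assert (0 <= (IZR k * h) * (IZR k * h)) by nra. nra. }
    set (V0 := v k0) in *.
    assert (HV0 : 0 <= V0) by nra.
    assert (Hk2' : 2 * IZR k <= IZR N) by (rewrite <- mult_IZR; apply IZR_le; lia).
    assert (Hk3' : - (2 * IZR k) <= IZR N) by (rewrite <- mult_IZR, <- opp_IZR; apply IZR_le; lia).
    assert (Hk0r : - IZR N <= IZR k0 <= IZR N).
    { rewrite <- opp_IZR. split; apply IZR_le; lia. }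
    destruct (Z_le_gt_dec k0 k) as [Hkk|Hkk].
    - assert (Hch := chordZ v k0 N k ltac:(lia) ltac:(intros j Hj; apply Hvc; lia)).
      rewrite !minus_IZR in Hch. fold V0 in Hch. rewrite HvN in Hch.
      assert (IZR k0 <= IZR k) by (apply IZR_le; lia).
      set (a := IZR k0) in *. set (x := IZR k) in *. set (b := IZR N) in *.
      assert (Hba : 0 < b - a) by lra.
      assert (E1 : (b - a) / 4 * V0 <= (b - x) * V0) by (apply Rmult_le_compat_r; lra).
      assert (E2 : (b - a) * (- C * (L * L) / 2) <= (x - a) * (- C * (L * L) / 2)).
      { assert (0 <= C * (L * L)) by nra. nra. }
      assert (E3 : (b - a) * (V0 / 4 - C * (L * L) / 2) <= (b - a) * v k) by lra.
      apply Rmult_le_reg_l in E3; [|lra]. assert (0 <= C * (L * L)) by nra. lra.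
    - assert (Hch := chordZ v (- N) k0 k ltac:(lia) ltac:(intros j Hj; apply Hvc; lia)).
      rewrite !minus_IZR, !opp_IZR in Hch. fold V0 in Hch. rewrite HvmN in Hch.
      assert (IZR k < IZR k0) by (apply IZR_lt; lia).
      set (a := IZR k0) in *. set (x := IZR k) in *. set (b := IZR N) in *.
      assert (Hba : 0 < a - - b) by lra.
      assert (E1 : (a - - b) / 4 * V0 <= (x - - b) * V0) by (apply Rmult_le_compat_r; lra).
      assert (E2 : (a - - b) * (- C * (L * L) / 2) <= (a - x) * (- C * (L * L) / 2)).
      { assert (0 <= C * (L * L)) by nra. nra. }
      assert (E3 : (a - - b) * (V0 / 4 - C * (L * L) / 2) <= (a - - b) * v k) by lra.
      apply Rmult_le_reg_l in E3; [|lra]. assert (0 <= C * (L * L)) by nra. lra. }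
  assert (H0in : (- N <= 0 <= N)%Z) by lia.
  set (m := u 0%Z / 4 - C * (L * L)).
  assert (Hm : m < T).
  { apply Rnot_le_lt. intros HTm.
    assert (HmK : K <= m) by lra.
    assert (Hbig : forall k, (- N <= k <= N)%Z -> (2 * k <= N)%Z -> (- (2 * k) <= N)%Z -> m <= u k).
    { intros k Hk Hk2 Hk3. apply (Hreg 0%Z k); auto. }
    set (p := (N / 2)%Z).
    assert (Hp : (2 * p <= N <= 2 * p + 1)%Z).
    { unfold p. assert (E := Z.div_mod N 2 ltac:(lia)). assert (E2 := Z.mod_pos_bound N 2 ltac:(lia)). lia. }
    assert (Hp8 : (3 * N <= 8 * p)%Z) by lia.
    set (gam := g m).
    set (z := fun j => u j + gam * ((IZR j * h) * (IZR j * h)) / 2).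
    assert (Hzc : forall j, (- p < j < p)%Z -> z (j+1)%Z - 2 * z j + z (j-1)%Z <= 0).
    { intros j Hj. unfold z; cbv beta.
      assert (E := Hsec j ltac:(lia)).
      assert (Huj := Hbig j ltac:(lia) ltac:(lia) ltac:(lia)).
      assert (F := Hfg (IZR j * h) (u j) (Hx j ltac:(lia)) ltac:(lra)).
      assert (G1 : gam <= g (u j)).
      { unfold gam. destruct (Req_dec m (u j)) as [<-|Hne]; [lra|].
        left; apply Hinc; lra. }
      assert (S := Hsq j).
      assert (0 <= (h * h) * (f (IZR j * h) (u j) - gam)) by (apply Rmult_le_pos; nra).
      replace (u (j + 1)%Z + gam * (IZR (j + 1) * h * (IZR (j + 1) * h)) / 2 -
        2 * (u j + gam * (IZR j * h * (IZR j * h)) / 2) +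
        (u (j - 1)%Z + gam * (IZR (j - 1) * h * (IZR (j - 1) * h)) / 2))
      with ((u (j + 1)%Z - 2 * u j + u (j - 1)%Z) + gam / 2 * (IZR (j + 1) * h * (IZR (j + 1) * h) - 2 * (IZR j * h * (IZR j * h)) +
    IZR (j - 1) * h * (IZR (j - 1) * h))) by (field).
      rewrite E, S. lra. }
    assert (Hch := chordZ z (- p) p 0 ltac:(lia) Hzc).
    unfold z in Hch. rewrite !minus_IZR, !opp_IZR in Hch. simpl in Hch.
    assert (Hu1 := Hbig p ltac:(lia) ltac:(lia) ltac:(lia)).
    assert (Hu2 := Hbig (- p)%Z ltac:(lia) ltac:(lia) ltac:(lia)).
    assert (Hpp : 0 < IZR p) by (apply IZR_lt; lia).
    assert (Hp8r : 3 * IZR N <= 8 * IZR p) by (rewrite <- !mult_IZR; apply IZR_le; lia).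
    set (P := IZR p) in *.
    assert (Hch1 : P * (u (- p)%Z + u p + gam * ((P * h) * (P * h))) <= P * (2 * u 0%Z)) by nra.
    apply Rmult_le_reg_l in Hch1; [|lra].
    assert (HPh : 3 * L <= 8 * (P * h)) by (rewrite HLN; nra).
    assert (HPh2 : 9 * (L * L) <= 64 * ((P * h) * (P * h))) by nra.
    assert (Hgam : A * m + B < gam) by (apply HT; lra).
    assert (Hgam0 : 0 < gam) by (apply gpos; lra).
    assert (Hgl : (A * m + B) * (L * L) < gam * (L * L)) by (apply Rmult_lt_compat_r; nra).
    assert (Hgl2 : 50 * m + 60 * C * (L * L) < gam * (L * L)).
    { replace ((A * m + B) * (L * L)) with ((A * (L * L)) * m + B * (L * L)) in Hgl by ring.
      rewrite HA in Hgl. unfold B in Hgl. lra. }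
    assert (Hg9 : 9 * (gam * (L * L)) <= 64 * (gam * ((P * h) * (P * h)))) by nra.
    assert (Hmdef : u 0%Z = 4 * m + 4 * C * (L * L)) by (unfold m; field).
    assert (0 <= C * (L * L)) by nra.
    lra. }
  assert (Hreg1 := Hreg k1 0%Z Hk1 H0in ltac:(lia) ltac:(lia)).
  assert (Hmdef : u 0%Z = 4 * m + 4 * C * (L * L)) by (unfold m; field).
  rewrite Rabs_pos_eq by (apply Hun; exact Hk1).
  assert (0 <= C * (L * L)) by nra.
  lra.
Qed.
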